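(* Let $A_1A_2A_3$ be a gyrotriangle in the Einstein gyrovector space $\mathbb{R}^n_s$ with gyroangles $\alpha_1,\alpha_2,\alpha_3$, side gyrolengths $a_{23},a_{13},a_{12}$ (where $a_{ij}=\|\ominus A_i\oplus A_j\|$), defect $\delta=\pi-\alpha_1-\alpha_2-\alpha_3$, and circumgyroradius $R$. Then, with $\gamma_{ij}=(1-a_{ij}^2/s^2)^{-1/2}$, $$\frac{\gamma_{23}a_{23}}{\sin\alpha_1}=\frac{\gamma_{13}a_{13}}{\sin\alpha_2}=\frac{\gamma_{12}a_{12}}{\sin\alpha_3}=\sqrt{\frac{(\gamma_{12}+1)(\gamma_{13}+1)(\gamma_{23}+1)}{2}}\,R$$ and $$\frac{\gamma_{23}a_{23}}{\sin\alpha_1}=\frac{\gamma_{13}a_{13}}{\sin\alpha_2}=\frac{\gamma_{12}a_{12}}{\sin\alpha_3}=2\,\frac{\sin(\alpha_1+\frac\delta2)\sin(\alpha_2+\frac\delta2)\sin(\alpha_3+\frac\delta2)}{\sin\alpha_1\sin\alpha_2\sin\alpha_3}\,R.$$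
   Context: Fix $s>0$, $n\ge2$; $\mathbb{R}^n_s=\{v\in\mathbb{R}^n:\|v\|<s\}$ with Einstein addition $u\oplus v=\frac{1}{1+u\cdot v/s^2}\{u+\frac{1}{\gamma_u}v+\frac{1}{s^2}\frac{\gamma_u}{1+\gamma_u}(u\cdot v)u\}$, $\gamma_v=(1-\|v\|^2/s^2)^{-1/2}$, $\ominus v=-v$. A gyrotriangle $A_1A_2A_3$ has gyrobarycentrically independent vertices ($\ominus A_1\oplus A_2,\ominus A_1\oplus A_3$ linearly independent); its gyroangle at $A_1$ is $\alpha_1$ with $\cos\alpha_1=\frac{(\ominus A_1\oplus A_2)\cdot(\ominus A_1\oplus A_3)}{\|\ominus A_1\oplus A_2\|\|\ominus A_1\oplus A_3\|}$, similarly for the others. Its circumgyrocenter $O$ is the point of $(A_1\oplus\mathrm{span}\{\ominus A_1\oplus A_2,\ominus A_1\oplus A_3\})\cap\mathbb{R}^n_s$ equigyrodistant from the three vertices (assumed here to exist), and the circumgyroradius is $R=\|\ominus A_1\oplus O\|$. *)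

(* Defs.v *)
From HB Require Import structures.
From mathcomp Require Import all_boot all_order all_algebra.
From mathcomp Require Import all_classical all_reals all_analysis.
Set Implicit Arguments. Unset Strict Implicit. Unset Printing Implicit Defensive.
Import Order.TTheory GRing.Theory Num.Theory.
Local Open Scope ring_scope.

Section Einstein.
Variables (R : realType) (n : nat).

Definition dotv (u v : 'rV[R]_n) : R := \sum_(i < n) u 0 i * v 0 i.
Definition normv (v : 'rV[R]_n) : R := Num.sqrt (dotv v v).

Definition in_ball (s : R) (v : 'rV[R]_n) : Prop := normv v < s.

Definition gammav (s : R) (v : 'rV[R]_n) : R :=
  (Num.sqrt (1 - normv v ^+ 2 / s ^+ 2))^-1.

Definition eadd (s : R) (u v : 'rV[R]_n) : 'rV[R]_n :=
  (1 + dotv u v / s ^+ 2)^-1 *: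
    (u + (gammav s u)^-1 *: v
       + ((s ^+ 2)^-1 * (gammav s u / (1 + gammav s u)) * dotv u v) *: u).

Definition eopp (v : 'rV[R]_n) : 'rV[R]_n := - v.

Definition gdiff (s : R) (A B : 'rV[R]_n) : 'rV[R]_n := eadd s (eopp A) B.

Definition gdist (s : R) (A B : 'rV[R]_n) : R := normv (gdiff s A B).

Definition lin_indep2 (u v : 'rV[R]_n) : Prop :=
  forall a b : R, a *: u + b *: v = 0 -> a = 0 /\ b = 0.

(* gyrotriangle: three points of the ball, gyrobarycentrically independent *)
Definition gyrotriangle (s : R) (A1 A2 A3 : 'rV[R]_n) : Prop :=
  [/\ in_ball s A1, in_ball s A2, in_ball s A3 &
      lin_indep2 (gdiff s A1 A2) (gdiff s A1 A3)].

Definition gyroangle (s : R) (A B C : 'rV[R]_n) : R :=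
  acos (dotv (gdiff s A B) (gdiff s A C) /
        (normv (gdiff s A B) * normv (gdiff s A C))).

Definition circumgyrocenter (s : R) (A1 A2 A3 O : 'rV[R]_n) : Prop :=
  [/\ in_ball s O,
      exists w : 'rV[R]_n, in_ball s w /\
        (exists c1 c2 : R, w = c1 *: gdiff s A1 A2 + c2 *: gdiff s A1 A3) /\
        O = eadd s A1 w,
      gdist s A1 O = gdist s A2 O &
      gdist s A1 O = gdist s A3 O].

Definition gammal (s a : R) : R := (Num.sqrt (1 - a ^+ 2 / s ^+ 2))^-1.

End Einstein.

(* Main.v *)
Require Import Defs.
From HB Require Import structures.
From mathcomp Require Import all_boot all_order all_algebra.
From mathcomp Require Import all_classical all_reals all_analysis.
From mathcomp Require Import ring lra.
Import Order.TTheory GRing.Theory Num.Theory.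
Local Open Scope ring_scope.
Set Implicit Arguments. Unset Strict Implicit. Unset Printing Implicit Defensive.

Ltac fside := repeat (apply/andP; split); done.

Section Vec.
Variables (R : realType) (n : nat).
Implicit Types (u v w A B C O : 'rV[R]_n) (a b : R).

Lemma dotvC u v : dotv u v = dotv v u.
Proof. by apply: eq_bigr => i _; rewrite mulrC. Qed.
Lemma dotvDl u v w : dotv (u + v) w = dotv u w + dotv v w.
Proof. by rewrite /dotv -big_split; apply: eq_bigr => i _; rewrite mxE mulrDl. Qed.
Lemma dotvDr u v w : dotv w (u + v) = dotv w u + dotv w v.
Proof. by rewrite dotvC dotvDl !(dotvC w). Qed.
Lemma dotvZl a u v : dotv (a *: u) v = a * dotv u v.
Proof. by rewrite /dotv mulr_sumr; apply: eq_bigr => i _; rewrite mxE mulrA. Qed.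
Lemma dotvZr a u v : dotv v (a *: u) = a * dotv v u.
Proof. by rewrite dotvC dotvZl dotvC. Qed.
Lemma dotv0r u : dotv u 0 = 0.
Proof. by rewrite /dotv big1 // => i _; rewrite mxE mulr0. Qed.
Lemma dotvNl u v : dotv (- u) v = - dotv u v.
Proof. by rewrite -scaleN1r dotvZl mulN1r. Qed.
Lemma dotvNr u v : dotv v (- u) = - dotv v u.
Proof. by rewrite dotvC dotvNl dotvC. Qed.
Lemma dotv_ge0 u : 0 <= dotv u u.
Proof. by apply: sumr_ge0 => i _; rewrite -expr2 sqr_ge0. Qed.
Lemma dotv_eq0 u : dotv u u = 0 -> u = 0.
Proof.
move=> h; apply/rowP => j; rewrite mxE.
have /eqP := h; rewrite psumr_eq0; last by move=> i _; rewrite -expr2 sqr_ge0.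
move=> /allP /(_ j (mem_index_enum _)) /implyP /(_ isT).
by rewrite -expr2 sqrf_eq0 => /eqP.
Qed.
Lemma normv2 u : normv u ^+ 2 = dotv u u.
Proof. by rewrite /normv sqr_sqrtr // dotv_ge0. Qed.
Lemma normv_ge0 u : 0 <= normv u.
Proof. exact: sqrtr_ge0. Qed.

Lemma CS u v : dotv u v ^+ 2 <= dotv u u * dotv v v.
Proof.
have [v0|vn0] := eqVneq (dotv v v) 0.
  by rewrite (dotv_eq0 v0) !dotv0r expr0n mulr0.
have vp : 0 < dotv v v by rewrite lt_neqAle eq_sym vn0 dotv_ge0.
have := dotv_ge0 (dotv v v *: u - dotv u v *: v).
rewrite dotvDl !dotvDr !dotvNl !dotvNr !dotvZl !dotvZr (dotvC v u) => h.
rewrite -subr_ge0; rewrite -(pmulr_rge0 _ vp); nra.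
Qed.

Lemma CS_strict u v : (forall a b, a *: u + b *: v = 0 -> a = 0 /\ b = 0) ->
  dotv u v ^+ 2 < dotv u u * dotv v v.
Proof.
move=> li.
have vn0 : dotv v v != 0.
  apply/eqP => /dotv_eq0 v0; have [] := li 0 1; first by rewrite v0 scale0r scaler0 addr0.
  by move=> _ /eqP; rewrite oner_eq0.
have vp : 0 < dotv v v by rewrite lt_neqAle eq_sym vn0 dotv_ge0.
set w := dotv v v *: u - dotv u v *: v.
have wn0 : dotv w w != 0.
  apply/eqP => /dotv_eq0 w0; have [] := li (dotv v v) (- dotv u v).
    by rewrite scaleNr; exact: w0.
  by move=> /eqP; rewrite (negbTE vn0).
have wp : 0 < dotv w w by rewrite lt_neqAle eq_sym wn0 dotv_ge0.
move: wp; rewrite /w dotvDl !dotvDr !dotvNl !dotvNr !dotvZl !dotvZr (dotvC v u) => h.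
rewrite -subr_gt0; rewrite -(pmulr_rgt0 _ vp); nra.
Qed.

Variable (s : R).
Hypothesis s_gt0 : 0 < s.
Let sn0 : s != 0. Proof. by rewrite gt_eqF. Qed.
Let s2n0 : s ^+ 2 != 0. Proof. by rewrite expf_neq0. Qed.
Let s2_gt0 : 0 < s ^+ 2. Proof. by rewrite exprn_gt0. Qed.

Lemma ball_dot u : in_ball s u -> dotv u u < s ^+ 2.
Proof.
rewrite /in_ball => h; rewrite -normv2.
by rewrite ltr_pXn2r // ?nnegrE ?normv_ge0 // ltW.
Qed.

Lemma ball_k u : in_ball s u -> 0 < 1 - dotv u u / s ^+ 2.
Proof.
move=> /ball_dot h; rewrite subr_gt0 ltr_pdivrMr // mul1r //.
Qed.

Lemma gam_gt0 u : in_ball s u -> 0 < gammav s u.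
Proof.
move=> h; rewrite /gammav invr_gt0 sqrtr_gt0 normv2; exact: ball_k.
Qed.

Lemma gam_dot u : in_ball s u -> dotv u u = s ^+ 2 * (1 - (gammav s u ^+ 2)^-1).
Proof.
move=> h; have k := ball_k h.
rewrite /gammav normv2 exprVn sqr_sqrtr ?ltW // invrK.
field; fside.
Qed.

Lemma dot_lt u v : in_ball s u -> in_ball s v -> `|dotv u v| < s ^+ 2.
Proof.
move=> hu hv; have := CS u v; have := ball_dot hu; have := ball_dot hv.
have := dotv_ge0 u; have := dotv_ge0 v => h1 h2 h3 h4 h5.
rewrite -(ltr_pXn2r (n:=2)) //; last by rewrite nnegrE ltW.
  rewrite real_normK ?num_real //.
  apply: (le_lt_trans h5); rewrite expr2.
  nra.
Qed.

Lemma one_sub_dot u v : in_ball s u -> in_ball s v -> 0 < 1 - dotv u v / s ^+ 2.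
Proof.
move=> hu hv; have := dot_lt hu hv; rewrite ltr_norml => /andP[_ h].
by rewrite subr_gt0 ltr_pdivrMr // mul1r.
Qed.

Lemma one_add_dot u v : in_ball s u -> in_ball s v -> 0 < 1 + dotv u v / s ^+ 2.
Proof.
move=> hu hv; have := dot_lt hu hv; rewrite ltr_norml => /andP[h _].
have : -1 < dotv u v / s ^+ 2 by rewrite ltr_pdivlMr // mulN1r.
lra.
Qed.

Lemma gammavN u : gammav s (- u) = gammav s u.
Proof. by rewrite /gammav /normv dotvNl dotvNr opprK. Qed.

Lemma gdiff_dec A B : gdiff s A B =
  ((1 + - dotv A B / s ^+ 2)^-1 * (-1 + (s ^+ 2)^-1 * (gammav s A / (1 + gammav s A)) * dotv A B)) *: A
  + ((1 + - dotv A B / s ^+ 2)^-1 * (gammav s A)^-1) *: B.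
Proof.
rewrite /gdiff /eadd /eopp gammavN dotvNl.
apply/rowP => i; rewrite !mxE; ring.
Qed.

Definition cc A B := gammav s A * gammav s B * (1 - dotv A B / s ^+ 2).

Lemma gdiff_dot A B C : in_ball s A -> in_ball s B -> in_ball s C ->
  dotv (gdiff s A B) (gdiff s A C) = s ^+ 2 * (1 - cc B C / (cc A B * cc A C)).
Proof.
move=> hA hB hC.
have gA := gam_gt0 hA; have gB := gam_gt0 hB; have gC := gam_gt0 hC.
have dB := one_sub_dot hA hB; have dC := one_sub_dot hA hC.
rewrite !gdiff_dec !dotvDl !dotvDr !dotvZl !dotvZr (gam_dot hA) (dotvC B A).
rewrite /cc.
have h1 : 1 + gammav s A != 0 by rewrite gt_eqF // addr_gt0.
have h2 : 1 - dotv A B / s ^+ 2 != 0 by rewrite gt_eqF.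
have h3 : 1 - dotv A C / s ^+ 2 != 0 by rewrite gt_eqF.
have h4 : gammav s A != 0 by rewrite gt_eqF.
have h5 : gammav s B != 0 by rewrite gt_eqF.
have h6 : gammav s C != 0 by rewrite gt_eqF.
have h7 : s ^+ 2 - dotv A B != 0.
  by rewrite gt_eqF // subr_gt0 -[X in _ < X]mul1r -ltr_pdivrMr // -subr_gt0.
have h8 : s ^+ 2 - dotv A C != 0.
  by rewrite gt_eqF // subr_gt0 -[X in _ < X]mul1r -ltr_pdivrMr // -subr_gt0.
field; fside.
Qed.

Lemma cc_gt0 A B : in_ball s A -> in_ball s B -> 0 < cc A B.
Proof.
move=> hA hB; rewrite /cc !mulr_gt0 ?gam_gt0 //; exact: one_sub_dot.
Qed.

Lemma ccC A B : cc A B = cc B A.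
Proof. rewrite /cc (dotvC A B); ring. Qed.

Lemma cc_self A : in_ball s A -> cc A A = 1.
Proof.
move=> hA; have gA := gam_gt0 hA; rewrite /cc (gam_dot hA).
have h : gammav s A != 0 by rewrite gt_eqF.
field; fside.
Qed.

Lemma gdiff_n2 A B : in_ball s A -> in_ball s B ->
  dotv (gdiff s A B) (gdiff s A B) = s ^+ 2 * (1 - (cc A B ^+ 2)^-1).
Proof.
move=> hA hB; rewrite gdiff_dot // cc_self // expr2 div1r //.
Qed.

Lemma gammal_gdist A B : in_ball s A -> in_ball s B -> gammal s (gdist s A B) = cc A B.
Proof.
move=> hA hB; have c0 := cc_gt0 hA hB.
have cn : cc A B != 0 by rewrite gt_eqF.
rewrite /gammal /gdist normv2 gdiff_n2 //.
have -> : 1 - s ^+ 2 * (1 - (cc A B ^+ 2)^-1) / s ^+ 2 = (cc A B)^-1 ^+ 2.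
  rewrite exprVn; field; fside.
by rewrite sqrtr_sqr ger0_norm ?invrK // invr_ge0 ltW.
Qed.

Lemma cc_ge1 A B : in_ball s A -> in_ball s B -> 1 <= cc A B.
Proof.
move=> hA hB; have c0 := cc_gt0 hA hB.
have := dotv_ge0 (gdiff s A B); rewrite gdiff_n2 // pmulr_rge0 // subr_ge0.
rewrite invf_le1 ?exprn_gt0 // => h; nra.
Qed.

Lemma cc_gt1 A B : in_ball s A -> in_ball s B -> gdiff s A B != 0 -> 1 < cc A B.
Proof.
move=> hA hB hn; have c0 := cc_gt0 hA hB.
have : 0 < dotv (gdiff s A B) (gdiff s A B).
  rewrite lt_neqAle dotv_ge0 andbT eq_sym; apply/eqP => /dotv_eq0 h.
  by rewrite h eqxx in hn.
rewrite gdiff_n2 // pmulr_rgt0 // subr_gt0.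
rewrite invf_lt1 ?exprn_gt0 // => h; nra.
Qed.

Lemma normv_gdiff A B : in_ball s A -> in_ball s B ->
  normv (gdiff s A B) = s * (Num.sqrt (cc A B ^+ 2 - 1) / cc A B).
Proof.
move=> hA hB; have c0 := cc_gt0 hA hB; have c1 := cc_ge1 hA hB.
have cn : cc A B != 0 by rewrite gt_eqF.
rewrite /normv gdiff_n2 //.
have -> : s ^+ 2 * (1 - (cc A B ^+ 2)^-1) =
   (s * (Num.sqrt (cc A B ^+ 2 - 1) / cc A B)) ^+ 2.
  have hS : 0 <= cc A B ^+ 2 - 1 by rewrite subr_ge0; nra.
  move: cn hS; generalize (cc A B) => c cn hS.
  rewrite exprMn exprMn exprVn sqr_sqrtr //; field; fside.
rewrite sqrtr_sqr ger0_norm //.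
apply: mulr_ge0; [exact: ltW | apply: divr_ge0; [exact: sqrtr_ge0 | exact: ltW]].
Qed.

Lemma Lcancel A B : in_ball s A -> in_ball s B ->
  A + (gammav s A)^-1 *: gdiff s A B
    + ((s ^+ 2)^-1 * (gammav s A / (1 + gammav s A)) * dotv A (gdiff s A B)) *: A
   = (1 + dotv A (gdiff s A B) / s ^+ 2) *: B.
Proof.
move=> hA hB.
have gA := gam_gt0 hA; have dB := one_sub_dot hA hB.
have h1 : 1 + gammav s A != 0 by rewrite gt_eqF // addr_gt0.
have h4 : gammav s A != 0 by rewrite gt_eqF.
have h7 : s ^+ 2 - dotv A B != 0.
  by rewrite gt_eqF // subr_gt0 -[X in _ < X]mul1r -ltr_pdivrMr // -subr_gt0.
rewrite !gdiff_dec !dotvDr !dotvZr (gam_dot hA).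
apply/rowP => i; rewrite !mxE.
field; fside.
Qed.

Lemma circ_rep A1 A2 A3 O c1 c2 :
  in_ball s A1 -> in_ball s A2 -> in_ball s A3 ->
  in_ball s (c1 *: gdiff s A1 A2 + c2 *: gdiff s A1 A3) ->
  O = eadd s A1 (c1 *: gdiff s A1 A2 + c2 *: gdiff s A1 A3) ->
  (1 + dotv A1 (c1 *: gdiff s A1 A2 + c2 *: gdiff s A1 A3) / s ^+ 2) *: O =
  (1 - c1 - c2) *: A1 + (c1 * (1 + dotv A1 (gdiff s A1 A2) / s ^+ 2)) *: A2
   + (c2 * (1 + dotv A1 (gdiff s A1 A3) / s ^+ 2)) *: A3.
Proof.
move=> h1 h2 h3 hw ->.
have m0 := one_add_dot h1 hw.
rewrite /eadd scalerA mulrV ?unitfE ?gt_eqF // scale1r.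
rewrite -[(c1 * _) *: A2]scalerA -[(c2 * _) *: A3]scalerA.
rewrite -(Lcancel h1 h2) -(Lcancel h1 h3).
rewrite !dotvDr !dotvZr.
apply/rowP => i; rewrite !mxE; ring.
Qed.

Lemma circ_lin A1 A2 A3 O m m1 m2 m3 P :
  in_ball s A1 -> in_ball s A2 -> in_ball s A3 -> in_ball s O -> in_ball s P ->
  m != 0 -> m = m1 + m2 + m3 ->
  m *: O = m1 *: A1 + m2 *: A2 + m3 *: A3 ->
  cc P O = (gammav s O * m1 / (m * gammav s A1)) * cc P A1
         + (gammav s O * m2 / (m * gammav s A2)) * cc P A2
         + (gammav s O * m3 / (m * gammav s A3)) * cc P A3.
Proof.
move=> h1 h2 h3 hO hP mn me eO.
have e : dotv P O = m^-1 * (m1 * dotv P A1 + m2 * dotv P A2 + m3 * dotv P A3).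
  rewrite -!dotvZr -!dotvDr -eO dotvZr mulrA mulVf // mul1r //.
have g1 : gammav s A1 != 0 by rewrite gt_eqF ?gam_gt0.
have g2 : gammav s A2 != 0 by rewrite gt_eqF ?gam_gt0.
have g3 : gammav s A3 != 0 by rewrite gt_eqF ?gam_gt0.
rewrite /cc e me.
rewrite me in mn.
field; fside.
Qed.
End Vec.


Section Core.
Variable R : realType.

Definition Dq (p q r : R) : R := 1 - p ^+ 2 - q ^+ 2 - r ^+ 2 + 2 * p * q * r.

Lemma tparam (p S : R) : 0 < S -> S ^+ 2 = p ^+ 2 - 1 -> 1 <= p ->
  exists t, [/\ 1 < t, p = (t + t^-1) / 2 & S = (t - t^-1) / 2].
Proof.
move=> hS hSe hp; exists (p + S).
have e : (p + S)^-1 = p - S.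
  apply: (@mulIf _ (p + S)); first by rewrite gt_eqF //; lra.
  rewrite mulVf; last by rewrite gt_eqF //; lra.
  have -> : (p - S) * (p + S) = p ^+ 2 - S ^+ 2 by ring.
  by rewrite hSe; ring.
rewrite e; split; [lra | field; done | field; done].
Qed.

Lemma ident (p q r S1 S2 S3 sq x1 x2 x3 y1 y2 y3 : R) :
  1 <= p -> 1 <= q -> 1 <= r ->
  0 < S1 -> 0 < S2 -> 0 < S3 ->
  S1 ^+ 2 = p ^+ 2 - 1 -> S2 ^+ 2 = q ^+ 2 - 1 -> S3 ^+ 2 = r ^+ 2 - 1 ->
  sq ^+ 2 = Dq p q r ->
  x1 = (r * q - p) / (S3 * S2) -> x2 = (r * p - q) / (S3 * S1) ->
  x3 = (q * p - r) / (S2 * S1) ->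
  y1 = sq / (S3 * S2) -> y2 = sq / (S3 * S1) -> y3 = sq / (S2 * S1) ->
  1 + x1 * (x2 * x3 - y2 * y3) + y1 * (y2 * x3 + x2 * y3)
    = Dq p q r / ((p + 1) * (q - 1) * (r - 1)).
Proof.
move=> hp hq hr h1 h2 h3 e1 e2 e3 esq -> -> -> hy1 hy2 hy3.
have n1 : S1 != 0 by rewrite gt_eqF.
have n2 : S2 != 0 by rewrite gt_eqF.
have n3 : S3 != 0 by rewrite gt_eqF.
have y23 : y2 * y3 = Dq p q r / (S3 * S1 * (S2 * S1)).
  by rewrite hy2 hy3 -esq; field; fside.
have y12 : y1 * y2 = Dq p q r / (S3 * S2 * (S3 * S1)).
  by rewrite hy2 hy1 -esq; field; fside.
have y13 : y1 * y3 = Dq p q r / (S3 * S2 * (S2 * S1)).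
  by rewrite hy1 hy3 -esq; field; fside.
have -> : forall a b c, 1 + a * (b * c - y2 * y3) + y1 * (y2 * c + b * y3) =
   1 + a * b * c - a * (y2 * y3) + (y1 * y2) * c + (y1 * y3) * b.
  by move=> a b c; ring.
rewrite y23 y12 y13.
have [t1 [t1g -> ->]] := tparam h1 e1 hp.
have [t2 [t2g -> ->]] := tparam h2 e2 hq.
have [t3 [t3g -> ->]] := tparam h3 e3 hr.
rewrite /Dq.
have a1 : t1 != 0 by rewrite gt_eqF //; lra.
have a2 : t2 != 0 by rewrite gt_eqF //; lra.
have a3 : t3 != 0 by rewrite gt_eqF //; lra.
field; repeat (apply/andP; split); apply/eqP => ?; nra.
Qed.

Lemma cosval (s a b c Sb Sc : R) : 0 < s -> 1 <= b -> 1 <= c -> 0 < Sb -> 0 < Sc ->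
  s ^+ 2 * (1 - a / (c * b)) / (s * (Sc / c) * (s * (Sb / b))) = (c * b - a) / (Sc * Sb).
Proof.
move=> hs hb hc h1 h2.
have : s != 0 by rewrite gt_eqF.
have : b != 0 by rewrite gt_eqF //; lra.
have : c != 0 by rewrite gt_eqF //; lra.
have : Sb != 0 by rewrite gt_eqF.
have : Sc != 0 by rewrite gt_eqF.
move=> ? ? ? ? ?; field; fside.
Qed.

Lemma sinval (a b c Sb Sc : R) : 0 < Sb -> 0 < Sc ->
  Sb ^+ 2 = b ^+ 2 - 1 -> Sc ^+ 2 = c ^+ 2 - 1 -> 0 < Dq a b c ->
  let x := (c * b - a) / (Sc * Sb) in
  [/\ -1 < x, x < 1, sin (acos x) = Num.sqrt (Dq a b c) / (Sc * Sb),
      cos (acos x) = x & 1 - x ^+ 2 = Dq a b c / ((c ^+ 2 - 1) * (b ^+ 2 - 1))].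
Proof.
move=> h1 h2 e1 e2 hD x.
have n1 : Sb != 0 by rewrite gt_eqF.
have n2 : Sc != 0 by rewrite gt_eqF.
have ex : 1 - x ^+ 2 = Dq a b c / ((c ^+ 2 - 1) * (b ^+ 2 - 1)).
  rewrite /x exprMn exprVn -e1 -e2.
  have -> : (c * b - a) ^+ 2 = Sc ^+ 2 * Sb ^+ 2 - Dq a b c.
    by rewrite e1 e2 /Dq; ring.
  field; fside.
have xp : 0 < 1 - x ^+ 2.
  rewrite ex -e1 -e2 divr_gt0 // mulr_gt0 // exprn_gt0 //.
have hx1 : -1 < x by nra.
have hx2 : x < 1 by nra.
have inx : x \in `[(-1), 1] by rewrite in_itv /= !ltW.
split => //; last by rewrite acosK.
rewrite sin_acos ?ltW //.
have -> : 1 - x ^+ 2 = (Num.sqrt (Dq a b c) / (Sc * Sb)) ^+ 2.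
  rewrite ex exprMn sqr_sqrtr ?ltW // exprVn exprMn e1 e2 //.
rewrite sqrtr_sqr ger0_norm // divr_ge0 ?sqrtr_ge0 // mulr_ge0 ?ltW //.
Qed.

Lemma pos_sum (a b c Sa Sb Sc X Y : R) : 1 <= b -> 1 <= c ->
  0 < Sa -> 0 < Sb -> 0 < Sc ->
  Sb ^+ 2 = b ^+ 2 - 1 -> Sc ^+ 2 = c ^+ 2 - 1 -> 0 < Dq a b c ->
  X * (Sc * Sa) = c * a - b -> Y * (Sb * Sa) = b * a - c -> 0 < X + Y.
Proof.
move=> hb hc ha' hb' hc' e1 e2 hD eX eY.
have hu : a - b * c + Sb * Sc > 0.
  have : (a - b * c) ^+ 2 < (Sb * Sc) ^+ 2.
    rewrite exprMn e1 e2; move: hD; rewrite /Dq => hD; nra.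
  have : 0 < Sb * Sc by rewrite mulr_gt0.
  move: (a - b * c) (Sb * Sc) => u v hv huv; nra.
have hn : 0 < X * (Sa * Sb * Sc) + Y * (Sa * Sb * Sc).
  have -> : X * (Sa * Sb * Sc) + Y * (Sa * Sb * Sc) =
    (X * (Sc * Sa)) * Sb + (Y * (Sb * Sa)) * Sc by ring.
  rewrite eX eY.
  have -> : (c * a - b) * Sb + (b * a - c) * Sc =
    (c * Sb + b * Sc) * (a - b * c + Sb * Sc)
     - c * Sc * (Sb ^+ 2 - (b ^+ 2 - 1)) - b * Sb * (Sc ^+ 2 - (c ^+ 2 - 1)) by ring.
  rewrite e1 e2 !subrr !mulr0 !subr0; apply: mulr_gt0 => //.
  apply: addr_gt0; apply: mulr_gt0 => //; lra.
have hp : 0 < Sa * Sb * Sc by rewrite !mulr_gt0.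
by rewrite -mulrDl pmulr_lgt0 in hn.
Qed.

Lemma acos_sum (x y : R) : -1 <= x <= 1 -> -1 <= y <= 1 -> 0 < x + y ->
  acos x + acos y < pi.
Proof.
move=> hx hy hxy.
have hy' : -1 <= - y <= 1 by move: hy => /andP[? ?]; apply/andP; split; lra.
rewrite -ltrBrDr -acosN //.
have i1 : acos (- y) \in `[0, pi] by rewrite in_itv /= acos_ge0 // acos_lepi.
have i2 : acos x \in `[0, pi] by rewrite in_itv /= acos_ge0 // acos_lepi.
rewrite -(ltr_cos i2 i1) !acosK ?in_itv //=; lra.
Qed.

Lemma sin_half_sq (a1 a2 a3 : R) :
  sin (a1 + (pi - a1 - a2 - a3) / 2) ^+ 2 =
  (1 + (cos a1 * (cos a2 * cos a3 - sin a2 * sin a3)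
        + sin a1 * (sin a2 * cos a3 + cos a2 * sin a3))) / 2.
Proof.
set u := (a1 - (a2 + a3)) / 2.
have -> : a1 + (pi - a1 - a2 - a3) / 2 = u + pi / 2 by rewrite /u; field.
rewrite sinDpihalf.
have e : cos (u + u) = 2 * cos u ^+ 2 - 1.
  by rewrite cosD -!expr2 sin2cos2; ring.
have -> : cos u ^+ 2 = (1 + cos (u + u)) / 2 by rewrite e; field.
have -> : u + u = a1 - (a2 + a3) by rewrite /u; field.
by rewrite cosB cosD sinD.
Qed.

Lemma sin_half_pos (a1 a2 a3 : R) : 0 < a1 < pi -> 0 < a2 < pi -> 0 < a3 < pi ->
  a2 + a3 < pi -> 0 < sin (a1 + (pi - a1 - a2 - a3) / 2).
Proof.
move=> /andP[? ?] /andP[? ?] /andP[? ?] ?; apply: sin_gt0_pi.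
apply/andP; split; lra.
Qed.

Definition Nq (p q r : R) : R := (1 - p ^+ 2) + (1 - q ^+ 2) + (1 - r ^+ 2)
  + 2 * ((q * p - r) + (r * p - q) + (r * q - p)).

Lemma sq_inj (u v : R) : 0 <= u -> 0 <= v -> u ^+ 2 = v ^+ 2 -> u = v.
Proof.
move=> hu hv e; by rewrite -(ger0_norm hu) -(ger0_norm hv) -!sqrtr_sqr e.
Qed.

Lemma core (s p q r S1 S2 S3 rho : R) :
  0 < s -> 1 <= p -> 1 <= q -> 1 <= r -> 0 < S1 -> 0 < S2 -> 0 < S3 ->
  S1 ^+ 2 = p ^+ 2 - 1 -> S2 ^+ 2 = q ^+ 2 - 1 -> S3 ^+ 2 = r ^+ 2 - 1 ->
  0 < Dq p q r -> 1 <= rho -> rho ^+ 2 * Nq p q r = Dq p q r ->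
  let al1 := acos (s ^+ 2 * (1 - p / (r * q)) / (s * (S3 / r) * (s * (S2 / q)))) in
  let al2 := acos (s ^+ 2 * (1 - q / (r * p)) / (s * (S3 / r) * (s * (S1 / p)))) in
  let al3 := acos (s ^+ 2 * (1 - r / (q * p)) / (s * (S2 / q) * (s * (S1 / p)))) in
  let delta := pi - al1 - al2 - al3 in
  let Rc := s * (Num.sqrt (rho ^+ 2 - 1) / rho) in
  [/\ p * (s * (S1 / p)) / sin al1 = q * (s * (S2 / q)) / sin al2,
      q * (s * (S2 / q)) / sin al2 = r * (s * (S3 / r)) / sin al3,
      r * (s * (S3 / r)) / sin al3 =
        Num.sqrt ((r + 1) * (q + 1) * (p + 1) / 2) * Rc &
      r * (s * (S3 / r)) / sin al3 =
        2 * (sin (al1 + delta / 2) * sin (al2 + delta / 2)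
             * sin (al3 + delta / 2))
          / (sin al1 * sin al2 * sin al3) * Rc].
Proof.
move=> hs hp hq hr h1 h2 h3 e1 e2 e3 hD hrho hN al1 al2 al3 delta Rc.
have hp1 : 1 < p by nra.
have hq1 : 1 < q by nra.
have hr1 : 1 < r by nra.
have D2 : Dq q p r = Dq p q r by rewrite /Dq; ring.
have D3 : Dq r p q = Dq p q r by rewrite /Dq; ring.
have D2' : 0 < Dq q p r by rewrite D2.
have D3' : 0 < Dq r p q by rewrite D3.
have [c1l c1u s1 c1 _] := @sinval p q r S2 S3 h2 h3 e2 e3 hD.
have [c2l c2u s2 c2 _] := @sinval q p r S1 S3 h1 h3 e1 e3 D2'.
have [c3l c3u s3 c3 _] := @sinval r p q S1 S2 h1 h2 e1 e2 D3'.
rewrite D2 in s2; rewrite D3 in s3.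
rewrite /Rc /delta /al1 /al2 /al3.
rewrite (@cosval s p q r S2 S3 hs hq hr h2 h3) (@cosval s q p r S1 S3 hs hp hr h1 h3)
  (@cosval s r p q S1 S2 hs hp hq h1 h2).
move: s1 s2 s3 c1 c2 c3 c1l c1u c2l c2u c3l c3u.
set x1 := (r * q - p) / (S3 * S2).
set x2 := (r * p - q) / (S3 * S1).
set x3 := (q * p - r) / (S2 * S1).
set sq := Num.sqrt (Dq p q r).
move=> s1 s2 s3 c1 c2 c3 c1l c1u c2l c2u c3l c3u.
rewrite s1 s2 s3.
have sqp : 0 < sq by rewrite sqrtr_gt0.
have sq2 : sq ^+ 2 = Dq p q r by rewrite sqr_sqrtr ?ltW.
have n1 : S1 != 0 by rewrite gt_eqF.
have n2 : S2 != 0 by rewrite gt_eqF.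
have n3 : S3 != 0 by rewrite gt_eqF.
have np : p != 0 by rewrite gt_eqF //; lra.
have nq : q != 0 by rewrite gt_eqF //; lra.
have nr : r != 0 by rewrite gt_eqF //; lra.
have nsq : sq != 0 by rewrite gt_eqF.
have ns : s != 0 by rewrite gt_eqF.
have K1 : p * (s * (S1 / p)) / (sq / (S3 * S2)) = s * S1 * S2 * S3 / sq.
  field; fside.
have K2 : q * (s * (S2 / q)) / (sq / (S3 * S1)) = s * S1 * S2 * S3 / sq.
  field; fside.
have K3 : r * (s * (S3 / r)) / (sq / (S2 * S1)) = s * S1 * S2 * S3 / sq.
  field; fside.
rewrite K1 K2 K3.
have T3 : s * S1 * S2 * S3 / sq =
   Num.sqrt ((r + 1) * (q + 1) * (p + 1) / 2) * (s * (Num.sqrt (rho ^+ 2 - 1) / rho)).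
  have hrho0 : 0 < rho by lra.
  have hrho2 : 0 <= rho ^+ 2 - 1 by nra.
  have hP : 0 <= (r + 1) * (q + 1) * (p + 1) / 2.
    by apply: divr_ge0 => //; apply: mulr_ge0; [apply: mulr_ge0|]; lra.
  apply: sq_inj.
  - by apply: divr_ge0 => //; rewrite ?mulr_ge0 ?ltW.
  - apply: mulr_ge0; first exact: sqrtr_ge0.
    apply: mulr_ge0; first exact: ltW.
    by apply: divr_ge0 => //; rewrite ?sqrtr_ge0 ?ltW.
  have hD0 : 0 <= Dq p q r by apply: ltW.
  rewrite !exprMn !exprVn !sqr_sqrtr // e1 e2 e3.
  have nrho : rho != 0 by rewrite gt_eqF.
  have -> : (rho ^+ 2 - 1) * (rho ^+ 2)^-1 = (Dq p q r - Nq p q r) / Dq p q r.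
    have nN : Nq p q r != 0.
      by apply/eqP => e; move: hD; rewrite -hN e mulr0 ltxx.
    rewrite -hN; field; fside.
  have nD : Dq p q r != 0 by rewrite gt_eqF.
  move: nD; rewrite /Dq /Nq => nD.
  field; fside.
split => //.
rewrite T3; congr (_ * _); symmetry.
have xi1 : -1 <= x1 <= 1 by apply/andP; split; lra.
have xi2 : -1 <= x2 <= 1 by apply/andP; split; lra.
have xi3 : -1 <= x3 <= 1 by apply/andP; split; lra.
have a1r : 0 < acos x1 < pi by rewrite acos_gt0 ?acos_ltpi //; apply/andP; split; lra.
have a2r : 0 < acos x2 < pi by rewrite acos_gt0 ?acos_ltpi //; apply/andP; split; lra.
have a3r : 0 < acos x3 < pi by rewrite acos_gt0 ?acos_ltpi //; apply/andP; split; lra.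
have ps23 : 0 < x2 + x3.
  apply: (@pos_sum p q r S1 S2 S3) => //; rewrite /x2 /x3; field; fside.
have ps13 : 0 < x1 + x3.
  apply: (@pos_sum q p r S2 S1 S3) => //; rewrite /x1 /x3; field; fside.
have ps12 : 0 < x1 + x2.
  apply: (@pos_sum r p q S3 S1 S2) => //; rewrite /x1 /x2; field; fside.
have as23 := acos_sum xi2 xi3 ps23.
have as13 := acos_sum xi1 xi3 ps13.
have as12 := acos_sum xi1 xi2 ps12.
move: c1 c2 c3 s1 s2 s3 a1r a2r a3r as23 as13 as12.
set a1 := acos x1; set a2 := acos x2; set a3 := acos x3.
move=> c1 c2 c3 s1 s2 s3 a1r a2r a3r as23 as13 as12.
have zp1 : 0 < sin (a1 + (pi - a1 - a2 - a3) / 2) by apply: sin_half_pos.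
have E2 : pi - a2 - a1 - a3 = pi - a1 - a2 - a3 by ring.
have E3 : pi - a3 - a1 - a2 = pi - a1 - a2 - a3 by ring.
have zp2 : 0 < sin (a2 + (pi - a1 - a2 - a3) / 2).
  by rewrite -E2; apply: sin_half_pos => //; rewrite addrC.
have zp3 : 0 < sin (a3 + (pi - a1 - a2 - a3) / 2).
  by rewrite -E3; apply: sin_half_pos.
have z1 : sin (a1 + (pi - a1 - a2 - a3) / 2) ^+ 2 =
    Dq p q r / ((p + 1) * (q - 1) * (r - 1)) / 2.
  rewrite sin_half_sq c1 c2 c3 s1 s2 s3 addrA.
  by rewrite (@ident p q r S1 S2 S3 sq x1 x2 x3 (sq / (S3 * S2)) (sq / (S3 * S1))
    (sq / (S2 * S1))).
have z2 : sin (a2 + (pi - a1 - a2 - a3) / 2) ^+ 2 =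
    Dq p q r / ((q + 1) * (p - 1) * (r - 1)) / 2.
  rewrite -E2 sin_half_sq c1 c2 c3 s1 s2 s3 addrA.
  rewrite (@ident q p r S2 S1 S3 sq x2 x1 x3 (sq / (S3 * S1)) (sq / (S3 * S2))
    (sq / (S2 * S1))) ?D2 //.
    by rewrite /x3 (mulrC q p) (mulrC S2 S1).
  by rewrite (mulrC S2 S1).
have z3 : sin (a3 + (pi - a1 - a2 - a3) / 2) ^+ 2 =
    Dq p q r / ((r + 1) * (p - 1) * (q - 1)) / 2.
  rewrite -E3 sin_half_sq c1 c2 c3 s1 s2 s3 addrA.
  rewrite (@ident r p q S3 S1 S2 sq x3 x1 x2 (sq / (S2 * S1)) (sq / (S3 * S2))
    (sq / (S3 * S1))) ?D3 //.
  - by rewrite /x1 (mulrC q r) (mulrC S2 S3).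
  - by rewrite /x2 (mulrC p r) (mulrC S1 S3).
  - by rewrite (mulrC S2 S3).
  - by rewrite (mulrC S1 S3).
move: zp1 zp2 zp3 z1 z2 z3.
set w1 := sin (a1 + _); set w2 := sin (a2 + _); set w3 := sin (a3 + _).
move=> zp1 zp2 zp3 z1 z2 z3.
have hP : 0 <= (r + 1) * (q + 1) * (p + 1) / 2.
  by apply: divr_ge0 => //; apply: mulr_ge0; [apply: mulr_ge0|]; lra.
have Fpos : 0 <= 2 * (w1 * w2 * w3) / (sq / (S3 * S2) * (sq / (S3 * S1)) * (sq / (S2 * S1))).
  have Y1 : 0 < sq / (S3 * S2) by apply: divr_gt0 => //; apply: mulr_gt0.
  have Y2 : 0 < sq / (S3 * S1) by apply: divr_gt0 => //; apply: mulr_gt0.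
  have Y3 : 0 < sq / (S2 * S1) by apply: divr_gt0 => //; apply: mulr_gt0.
  have W : 0 < w1 * w2 * w3 by apply: mulr_gt0 => //; apply: mulr_gt0.
  apply: ltW; apply: divr_gt0.
    by apply: mulr_gt0.
  by apply: mulr_gt0 => //; apply: mulr_gt0.
apply: (sq_inj Fpos (sqrtr_ge0 _)).
rewrite sqr_sqrtr //.
have -> : (2 * (w1 * w2 * w3) / (sq / (S3 * S2) * (sq / (S3 * S1)) * (sq / (S2 * S1)))) ^+ 2
  = 4 * w1 ^+ 2 * w2 ^+ 2 * w3 ^+ 2 * (S3 ^+ 2 * S2 ^+ 2 * S3 ^+ 2 * S1 ^+ 2 * S2 ^+ 2 * S1 ^+ 2)
     / (sq ^+ 2) ^+ 3.
  field; fside.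
rewrite z1 z2 z3 e1 e2 e3 sq2.
have nD : Dq p q r != 0 by rewrite gt_eqF.
have : p - 1 != 0 by rewrite gt_eqF //; lra.
have : q - 1 != 0 by rewrite gt_eqF //; lra.
have : r - 1 != 0 by rewrite gt_eqF //; lra.
have : p + 1 != 0 by rewrite gt_eqF //; lra.
have : q + 1 != 0 by rewrite gt_eqF //; lra.
have : r + 1 != 0 by rewrite gt_eqF //; lra.
move=> ? ? ? ? ? ?.
field; fside.
Qed.
End Core.

Section Scal.
Variable R : realType.

Lemma rho_eq (p q r rho l1 l2 l3 : R) :
  rho = l1 + l2 * r + l3 * q -> rho = l1 * r + l2 + l3 * p ->
  rho = l1 * q + l2 * p + l3 -> 1 = l1 * rho + l2 * rho + l3 * rho ->
  rho ^+ 2 * Nq p q r = Dq p q r.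
Proof.
move=> E1 E2 E3 E4.
have H : Dq p q r - rho ^+ 2 * Nq p q r =
  Dq p q r * (1 - (l1 * rho + l2 * rho + l3 * rho))
  + rho * ((1 - p ^+ 2 + (p * q - r) + (r * p - q)) * ((l1 + l2 * r + l3 * q) - rho)
         + ((p * q - r) + (1 - q ^+ 2) + (q * r - p)) * ((l1 * r + l2 + l3 * p) - rho)
         + ((r * p - q) + (q * r - p) + (1 - r ^+ 2)) * ((l1 * q + l2 * p + l3) - rho)).
  by rewrite /Dq /Nq; ring.
move: H; rewrite -E1 -E2 -E3 -E4 !subrr => H.
apply/eqP; rewrite eq_sym -subr_eq0; apply/eqP; rewrite H; ring.
Qed.

Lemma D_pos (s p q r : R) : 0 < s -> 0 < r -> 0 < q ->
  (s ^+ 2 * (1 - p / (r * q))) ^+ 2 <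
    s ^+ 2 * (1 - (r ^+ 2)^-1) * (s ^+ 2 * (1 - (q ^+ 2)^-1)) -> 0 < Dq p q r.
Proof.
move=> hs hr hq h.
have E : s ^+ 2 * (1 - (r ^+ 2)^-1) * (s ^+ 2 * (1 - (q ^+ 2)^-1))
   - (s ^+ 2 * (1 - p / (r * q))) ^+ 2 = (s ^+ 4 / (r * q) ^+ 2) * Dq p q r.
  have : r != 0 by rewrite gt_eqF.
  have : q != 0 by rewrite gt_eqF.
  move=> ? ?; rewrite /Dq; field; fside.
move: h; rewrite -subr_gt0 E pmulr_rgt0 //.
by rewrite divr_gt0 // exprn_gt0 // mulr_gt0.
Qed.

Lemma gt1 (p q r : R) : 1 <= p -> 1 <= q -> 1 <= r -> 0 < Dq p q r -> 1 < p.
Proof.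
move=> hp hq hr hD; case: (ltrP 1 p) => // hp'.
have ep : p = 1 by lra.
have e : Dq 1 q r = - (q - r) ^+ 2 by rewrite /Dq; ring.
move: hD; rewrite ep e; have := sqr_ge0 (q - r); lra.
Qed.
End Scal.

Theorem mainTheorem8 (R : realType) (n : nat) (s : R)
    (A1 A2 A3 O : 'rV[R]_n) :
  0 < s -> (2 <= n)%N ->
  gyrotriangle s A1 A2 A3 ->
  circumgyrocenter s A1 A2 A3 O ->
  let alpha1 := gyroangle s A1 A2 A3 in
  let alpha2 := gyroangle s A2 A1 A3 in
  let alpha3 := gyroangle s A3 A1 A2 in
  let a23 := gdist s A2 A3 in
  let a13 := gdist s A1 A3 in
  let a12 := gdist s A1 A2 in
  let g23 := gammal s a23 in
  let g13 := gammal s a13 in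
  let g12 := gammal s a12 in
  let delta := pi - alpha1 - alpha2 - alpha3 in
  let Rc := gdist s A1 O in
  [/\ g23 * a23 / sin alpha1 = g13 * a13 / sin alpha2,
      g13 * a13 / sin alpha2 = g12 * a12 / sin alpha3,
      g12 * a12 / sin alpha3 =
        Num.sqrt ((g12 + 1) * (g13 + 1) * (g23 + 1) / 2) * Rc &
      g12 * a12 / sin alpha3 =
        2 * (sin (alpha1 + delta / 2) * sin (alpha2 + delta / 2)
             * sin (alpha3 + delta / 2))
          / (sin alpha1 * sin alpha2 * sin alpha3) * Rc].
Proof.
move=> hs _ [h1 h2 h3 hli] [hO [w [hw [[c1 [c2 ew]] eO]]] e12 e13].
move=> alpha1 alpha2 alpha3 a23 a13 a12 g23 g13 g12 delta Rc.
have r12 : cc s A1 O = cc s A2 O.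
  by rewrite -(gammal_gdist hs h1 hO) -(gammal_gdist hs h2 hO) e12.
have r13 : cc s A1 O = cc s A3 O.
  by rewrite -(gammal_gdist hs h1 hO) -(gammal_gdist hs h3 hO) e13.
have hw' := hw; rewrite ew in hw'.
have erep := circ_rep hs h1 h2 h3 hw' (etrans eO (congr1 _ ew)).
set m := 1 + _ in erep.
set m1 := 1 - c1 - c2 in erep.
set m2 := c1 * _ in erep.
set m3 := c2 * _ in erep.
have mpos : 0 < m.
  by rewrite /m -ew; apply: (one_add_dot hs h1 hw).
have mn : m != 0 by rewrite gt_eqF.
have me : m = m1 + m2 + m3 by rewrite /m /m1 /m2 /m3 dotvDr !dotvZr; ring.
have L1 := circ_lin hs h1 h2 h3 hO h1 mn me erep.
have L2 := circ_lin hs h1 h2 h3 hO h2 mn me erep.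
have L3 := circ_lin hs h1 h2 h3 hO h3 mn me erep.
have L4 := circ_lin hs h1 h2 h3 hO hO mn me erep.
move: L1 L2 L3 L4.
set l1 := gammav s O * m1 / _; set l2 := gammav s O * m2 / _;
  set l3 := gammav s O * m3 / _.
rewrite !cc_self // -r12 -r13 (ccC s O A1) (ccC s O A2) (ccC s O A3) -r12 -r13.
rewrite (ccC s A2 A1) (ccC s A3 A1) (ccC s A3 A2).
move=> L1 L2 L3 L4.
have hN : cc s A1 O ^+ 2 * Nq (cc s A2 A3) (cc s A1 A3) (cc s A1 A2)
   = Dq (cc s A2 A3) (cc s A1 A3) (cc s A1 A2).
  apply: (@rho_eq _ _ _ _ _ l1 l2 l3).
  - by rewrite {1}L1 mulr1.
  - by rewrite {1}L2 mulr1.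
  - by rewrite {1}L3 mulr1.
  - by rewrite -L4.
have hD : 0 < Dq (cc s A2 A3) (cc s A1 A3) (cc s A1 A2).
  have := CS_strict hli.
  rewrite gdiff_dot // !gdiff_n2 //.
  apply: D_pos => //; exact: cc_gt0.
have hp := cc_ge1 hs h2 h3; have hq := cc_ge1 hs h1 h3; have hr := cc_ge1 hs h1 h2.
have hrho := cc_ge1 hs h1 hO.
move: hp hq hr hrho hD hN.
rewrite /Rc /delta /alpha1 /alpha2 /alpha3 /g23 /g13 /g12 /a23 /a13 /a12.
rewrite !(gammal_gdist hs) // /gyroangle !(gdiff_dot hs) // /gdist !(normv_gdiff hs) //.
rewrite (ccC s A2 A1) (ccC s A3 A1) (ccC s A3 A2).
move: (cc s A2 A3) (cc s A1 A3) (cc s A1 A2) (cc s A1 O) => p q r rho hp hq hr hrho hD hN.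
have hp1 : 1 < p by apply: (gt1 hp hq hr hD).
have hq1 : 1 < q.
  apply: (gt1 hq hp hr); by move: hD; rewrite /Dq; lra.
have hr1 : 1 < r.
  apply: (gt1 hr hp hq); by move: hD; rewrite /Dq; lra.
have P1 : 0 < p ^+ 2 - 1 by nra.
have P2 : 0 < q ^+ 2 - 1 by nra.
have P3 : 0 < r ^+ 2 - 1 by nra.
have S1 : 0 < Num.sqrt (p ^+ 2 - 1) by rewrite sqrtr_gt0.
have S2 : 0 < Num.sqrt (q ^+ 2 - 1) by rewrite sqrtr_gt0.
have S3 : 0 < Num.sqrt (r ^+ 2 - 1) by rewrite sqrtr_gt0.
have := (core hs hp hq hr S1 S2 S3
  (sqr_sqrtr (ltW P1)) (sqr_sqrtr (ltW P2)) (sqr_sqrtr (ltW P3)) hD hrho hN).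
exact.
Qed.
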